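(* Let $X$ be a shift space over $\mathcal{A}$ and let $\sigma:\mathcal{A}^*\to\mathcal{A}^*$ be a return morphism that is planar preserving from $(\preceq^L,\preceq^R)$ to $(\le^L,\le^R)$. A word $v\in\mathcal{L}(X)$ is planar for $(\preceq^L,\preceq^R)$ in $X$ if and only if every extended image of $v$ under $\sigma$ is planar for $(\le^L,\le^R)$ in $\sigma\cdot X$.
   Context: Shift spaces over $\mathcal{A}$: nonempty closed shift-invariant $X\subseteq\mathcal{A}^{\mathbb{Z}}$ with language $\mathcal{L}(X)$ containing all letters; $E_X(v)=\{(a,b):avb\in\mathcal{L}(X)\}$. Morphisms are non-erasing; $\sigma\cdot X=\{S^k\sigma(x):x\in X,0\le k<|\sigma(x_0)|\}$. A return morphism for $w\in\mathcal{A}^+$ is an injective morphism with $\sigma(a)w$ containing exactly two occurrences of $w$, as proper prefix and proper suffix, for each letter $a$ ($w$ of maximal length if unspecified). $\mathcal{A}^L_{\sigma,s}=\{a:\sigma(a)\in\mathcal{A}^+s\}$, $\mathcal{A}^R_{\sigma,p}=\{a:\sigma(a)w\in p\mathcal{A}^+\}$; $\varphi^L_{\sigma,s}(a)$ is the letter $a'$ with $\sigma(a)\in\mathcal{A}^*a's$, $\varphi^R_{\sigma,p}(b)$ the letter $b'$ with $\sigma(b)w\in pb'\mathcal{A}^*$; $\mathcal{T}^L(\sigma)$, $\mathcal{T}^R(\sigma)$ are the sets of longest common suffixes of $\sigma(a),\sigma(b)$ and longest common prefixes of $\sigma(a)w,\sigma(b)w$, over $a\ne b$. For $v\in\mathcal{L}(X)$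 and $s,p$ let $E_{X,s,p}(v)=E_X(v)\cap(\mathcal{A}^L_{\sigma,s}\times\mathcal{A}^R_{\sigma,p})$. A word $u\in\mathcal{L}(\sigma\cdot X)$ is an extended image of $v$ under $\sigma$ if $u=s\sigma(v)p$ with $s\in\mathcal{A}^*$, $p\in w\mathcal{A}^*$ and $E_{X,s,p}(v)\ne\emptyset$. For total orders $\le^L,\le^R$, a word $u$ of a shift $Y$ is planar for $(\le^L,\le^R)$ if for all $(a_1,b_1),(a_2,b_2)\in E_Y(u)$, $a_1<^La_2$ implies $b_1\le^Rb_2$. A partial map $\varphi$ is order preserving from $\preceq$ to $\le$ if $x\prec y$ implies $\varphi(x)\le\varphi(y)$ on its domain; $\sigma$ is planar preserving from $(\preceq^L,\preceq^R)$ to $(\le^L,\le^R)$ if every $\varphi^L_{\sigma,s}$ ($s\in\mathcal{T}^L(\sigma)$) is order preserving from $\preceq^L$ to $\le^L$ and every $\varphi^R_{\sigma,p}$ ($p\in\mathcal{T}^R(\sigma)$) is order preserving from $\preceq^R$ to $\le^R$. *)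

(* Defs.v *)
From HB Require Import structures.
From mathcomp Require Import all_boot all_order all_algebra.
Set Implicit Arguments. Unset Strict Implicit. Unset Printing Implicit Defensive.
Import GRing.Theory Num.Theory.

Definition win {A : Type} (x : int -> A) (i : int) (n : nat) : seq A :=
  [seq x (i + (j%:Z))%R | j <- iota 0 n].

Definition shiftZ {A : Type} (x : int -> A) : int -> A := fun i => x (i + 1)%R.

Definition lang {A : Type} (X : (int -> A) -> Prop) (w : seq A) : Prop :=
  exists x, X x /\ exists i, win x i (size w) = w.

(* nonempty, shift invariant (S X = X), closed in the product topology,
   and every letter occurs *)
Definition is_shift_space (A : finType) (X : (int -> A) -> Prop) : Prop :=
  [/\ (exists x, X x),
      (forall x, X (shiftZ x) <-> X x),
      (forall x, (forall n : nat, exists y, X y /\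
            win y (- (n%:Z))%R (2 * n).+1 = win x (- (n%:Z))%R (2 * n).+1) -> X x)
    & (forall a : A, lang X [:: a])].

Definition ext {A : Type} (X : (int -> A) -> Prop) (v : seq A) (a b : A) : Prop :=
  lang X (a :: v ++ [:: b]).

Definition mword {A : Type} (sigma : A -> seq A) (u : seq A) : seq A :=
  flatten (map sigma u).

Definition non_erasing {A : Type} (sigma : A -> seq A) : Prop :=
  forall a, sigma a <> [::].

Definition occurrences {A : eqType} (w u : seq A) : nat :=
  count (fun i => take (size w) (drop i u) == w) (iota 0 (size u).+1).

Definition is_return_morphism {A : eqType} (sigma : A -> seq A) (w : seq A) : Prop :=
  [/\ w != [::], non_erasing sigma, injective (mword sigma)
    & forall a, [/\ occurrences w (sigma a ++ w) = 2%N,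
                    prefix w (sigma a ++ w), suffix w (sigma a ++ w)
                  & size w < size (sigma a ++ w)]].

Definition AL {A : Type} (sigma : A -> seq A) (s : seq A) (a : A) : Prop :=
  exists u, u <> [::] /\ sigma a = u ++ s.
Definition AR {A : Type} (sigma : A -> seq A) (w p : seq A) (a : A) : Prop :=
  exists u, u <> [::] /\ sigma a ++ w = p ++ u.

(* phi^L_{sigma,s}(a): the letter a' with sigma(a) in A^* a' s (meaningful on AL) *)
Definition phiL {A : Type} (sigma : A -> seq A) (s : seq A) (a : A) : A :=
  nth a (sigma a) (size (sigma a) - size s).-1.
(* phi^R_{sigma,p}(b): the letter b' with sigma(b) w in p b' A^* (meaningful on AR) *)
Definition phiR {A : Type} (sigma : A -> seq A) (w p : seq A) (b : A) : A :=
  nth b (sigma b ++ w) (size p).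

Fixpoint lcp {A : eqType} (s t : seq A) : seq A :=
  match s, t with
  | x :: s', y :: t' => if x == y then x :: lcp s' t' else [::]
  | _, _ => [::]
  end.
Definition lcs {A : eqType} (s t : seq A) : seq A := rev (lcp (rev s) (rev t)).

Definition TL {A : eqType} (sigma : A -> seq A) (s : seq A) : Prop :=
  exists a b, a != b /\ s = lcs (sigma a) (sigma b).
Definition TR {A : eqType} (sigma : A -> seq A) (w p : seq A) : Prop :=
  exists a b, a != b /\ p = lcp (sigma a ++ w) (sigma b ++ w).

Definition total_order {A : Type} (r : rel A) : Prop :=
  [/\ reflexive r, antisymmetric r, transitive r & total r].

Definition order_preserving_on {A : eqType} (dom : A -> Prop) (f : A -> A)
  (pre le : rel A) : Prop :=
  forall x y, dom x -> dom y -> pre x y -> x != y -> le (f x) (f y).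

Definition planar_preserving {A : eqType} (sigma : A -> seq A) (w : seq A)
  (preL preR leL leR : rel A) : Prop :=
  (forall s, TL sigma s -> order_preserving_on (AL sigma s) (phiL sigma s) preL leL) /\
  (forall p, TR sigma w p -> order_preserving_on (AR sigma w p) (phiR sigma w p) preR leR).

Definition planar {A : eqType} (Y : (int -> A) -> Prop) (leL leR : rel A) (u : seq A)
  : Prop :=
  forall a1 b1 a2 b2, ext Y u a1 b1 -> ext Y u a2 b2 ->
    leL a1 a2 -> a1 != a2 -> leR b1 b2.

(* sigma . X = { S^k sigma(x) : x in X, 0 <= k < |sigma(x_0)| }, where sigma(x) has
   sigma(x_0) starting at position 0.  y = S^k sigma(x) is described by its windows:
   sigma(x_{-m} ... x_m) sits in y starting at position -(k + |sigma(x_{-m}...x_{-1})|). *)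
Definition sigma_dot {A : Type} (sigma : A -> seq A) (X : (int -> A) -> Prop)
  : (int -> A) -> Prop :=
  fun y => exists x, X x /\ exists k : nat, k < size (sigma (x 0%R)) /\
    forall m : nat,
      let pre := mword sigma (win x (- (m%:Z))%R m) in
      let full := mword sigma (win x (- (m%:Z))%R (2 * m).+1) in
      win y (- ((k + size pre)%:Z))%R (size full) = full.

Definition ext_image {A : eqType} (sigma : A -> seq A) (w : seq A)
  (X : (int -> A) -> Prop) (v u : seq A) : Prop :=
  exists s p, (exists q, p = w ++ q) /\ u = s ++ mword sigma v ++ p /\
    (exists a b, ext X v a b /\ AL sigma s a /\ AR sigma w p b) /\
    lang (sigma_dot sigma X) u.

(* Main.v *)
Require Import Defs.
From mathcomp Require Import all_boot all_order all_algebra zify.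
Set Implicit Arguments. Unset Strict Implicit. Unset Printing Implicit Defensive.

Lemma cat_split (T : Type) (s1 s2 t1 t2 : seq T) :
  s1 ++ s2 = t1 ++ t2 -> size s1 <= size t1 -> exists m, t1 = s1 ++ m /\ s2 = m ++ t2.
Proof.
elim: s1 t1 => [|x s1 IH] t1 /=; first by move=> -> _; exists t1.
case: t1 => [|y t1] //= [-> E] h.
by have [m [-> ->]] := IH _ E h; exists m.
Qed.

Lemma catL (T : Type) (s t1 t2 : seq T) : s ++ t1 = s ++ t2 -> t1 = t2.
Proof. by elim: s => //= x s IH [] /IH. Qed.

Lemma catR (T : Type) (s t1 t2 : seq T) : t1 ++ s = t2 ++ s -> t1 = t2.
Proof.
move=> E; have := congr1 size E; rewrite !size_cat => hs.
have h : size t1 <= size t2 by lia.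
have [m [-> E2]] := cat_split E h.
have : size m = 0 by have := congr1 size E2; rewrite size_cat; lia.
by case: m E2 => // _ _; rewrite cats0.
Qed.

Section Words.
Variable A : eqType.
Variable sigma : A -> seq A.
Variable w : seq A.
Hypothesis Hret : is_return_morphism sigma w.

Local Notation ms := (mword sigma).

Lemma ms_cat s t : ms (s ++ t) = ms s ++ ms t.
Proof. by rewrite /mword map_cat flatten_cat. Qed.
Lemma ms_cons a s : ms (a :: s) = sigma a ++ ms s.
Proof. by []. Qed.
Lemma ms1 a : ms [:: a] = sigma a.
Proof. by rewrite /mword /= cats0. Qed.
Lemma ms_rcons s a : ms (rcons s a) = ms s ++ sigma a.
Proof. by rewrite -cats1 ms_cat ms1. Qed.

Lemma sig_ne a : 0 < size (sigma a).
Proof. case: Hret => _ Hne _ _. by case E: (sigma a) => //; have := Hne a. Qed.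

Lemma size_ms s : size s <= size (ms s).
Proof. elim: s => //= a s IH. rewrite ms_cons size_cat. have := sig_ne a. lia. Qed.

Lemma sig_inj a b : sigma a = sigma b -> a = b.
Proof.
case: Hret => _ _ Hinj _ E.
have : ms [:: a] = ms [:: b] by rewrite !ms1.
by move/Hinj => [].
Qed.

Lemma ret_occ a t : take (size w) (drop t (sigma a ++ w)) = w ->
  t = 0 \/ t = size (sigma a).
Proof.
case: Hret => wne Hne Hinj /(_ a) [Hocc Hpre Hsuf Hsz] Ht.
have [->|t0] := eqVneq t 0; first by left.
have [->|t1] := eqVneq t (size (sigma a)); first by right.
exfalso.
have sa0 := sig_ne a.
move: Hocc Ht Hpre Hsuf Hsz; set u := sigma a ++ w => Hocc Ht Hpre Hsuf Hsz.
have tle : t <= size u.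
  rewrite leqNgt; apply/negP => h. move: Ht; rewrite drop_oversize ?(ltnW h) //= => E.
  by move: wne; rewrite -E.
set f := fun i => take (size w) (drop i u) == w.
have o0 : f 0 by move/prefixP: Hpre => [r Er]; rewrite /f Er drop0 take_size_cat.
have o1 : f (size (sigma a)) by rewrite /f /u drop_size_cat // take_size.
have o2 : f t by rewrite /f Ht.
have : size [:: 0; size (sigma a); t] <= size (filter f (iota 0 (size u).+1)).
  apply: uniq_leq_size.
    rewrite /= !inE; move: t0 t1 sa0; clear; lia.
  move=> i; rewrite !inE mem_filter mem_iota => /or3P [] /eqP ->; apply/andP; split => //.
  rewrite /u size_cat; lia.
have hc : count f (iota 0 (size u).+1) = 2 by [].
by rewrite size_filter; move: hc; rewrite /u size_cat => ->.
Qed.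

Lemma key a q L R : sigma a ++ w ++ q = L ++ w ++ R ->
  0 < size L -> size L < size (sigma a) -> False.
Proof.
move=> E h0 h1.
have : take (size w) (drop (size L) (sigma a ++ w ++ q)) = w.
  by rewrite E drop_size_cat // take_size_cat.
rewrite catA drop_cat size_cat ifT; last by lia.
rewrite take_cat size_drop size_cat ifT; last by lia.
by move/ret_occ; lia.
Qed.

Lemma startw r : exists q, ms r ++ w = w ++ q.
Proof.
elim: r => [|a r IHr]; first by exists [::]; rewrite cats0.
have [q IH] := IHr.
case: Hret => _ _ _ /(_ a) [_ /prefixP [q' Hp] _ _].
by exists (q' ++ q); rewrite ms_cons -catA IH catA Hp catA.
Qed.

Lemma lemsuf a b t : sigma b = t ++ sigma a -> t = [::].
Proof.
case: t => [//|x t] E; exfalso.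
have [q Hq] := startw [:: a]; rewrite ms1 in Hq.
apply: (@key b [::] (x :: t) q).
- by rewrite cats0 E -catA Hq.
- by [].
- by rewrite E size_cat; have := sig_ne a; lia.
Qed.

Lemma cut Z L R : ms Z ++ w = L ++ w ++ R -> exists Zp Zs, Z = Zp ++ Zs /\ ms Zp = L.
Proof.
elim: Z L => [|z Z IH] L.
  move=> E; have := congr1 size E; rewrite /= !size_cat => hs.
  case: L E hs => [|y L] E hs; first by exists [::], [::].
  by exfalso; move: hs => /=; lia.
case: L => [|y L]; first by exists [::], (z :: Z).
rewrite ms_cons -catA => E.
have [hle|hlt] := leqP (size (sigma z)) (size (y :: L)).
  have [m [Em E2]] := cat_split E hle.
  have [Zp [Zs [-> Hm]]] := IH m E2.
  by exists (z :: Zp), Zs; rewrite ms_cons Em Hm.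
have [q Hq] := startw Z.
by exfalso; apply: (@key z q (y :: L) R) => //; rewrite -Hq.
Qed.

Lemma lem2 v Zp L : ms Zp = L ++ ms v -> exists Zq, Zp = Zq ++ v /\ ms Zq = L.
Proof.
elim/last_ind: v Zp L => [|v e IH] Zp L.
  by rewrite cats0 => <-; exists Zp; rewrite cats0.
case/lastP: Zp => [|Zp z].
  move=> E; have := congr1 size E; rewrite ms_rcons !size_cat /=.
  by have := sig_ne e; lia.
rewrite !ms_rcons catA => E.
have ez : e = z.
  have := congr1 size E; rewrite !size_cat => hs.
  have [hle|hlt] := leqP (size (sigma z)) (size (sigma e)).
    have h : size (L ++ ms v) <= size (ms Zp) by rewrite size_cat; lia.
    have [m' [Em' E']] := cat_split (esym E) h.
    have m'0 := lemsuf E'.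
    by move: E'; rewrite m'0 => /sig_inj.
  have h : size (ms Zp) <= size (L ++ ms v) by rewrite size_cat; lia.
  have [m' [Em' E']] := cat_split E h.
  have m'0 := lemsuf E'.
  by move: E'; rewrite m'0 => /sig_inj /esym.
subst z.
have := catR E => /IH [Zq [-> <-]].
by exists Zq; rewrite rcons_cat.
Qed.

Lemma desub Z L R c s v q d a0 b0 :
  ms Z ++ w = L ++ c :: s ++ ms v ++ (w ++ q) ++ d :: R ->
  AL sigma s a0 -> AR sigma w (w ++ q) b0 ->
  exists a b, (exists Z1 Z2, Z = Z1 ++ a :: v ++ b :: Z2) /\
    (exists g, sigma a = g ++ c :: s) /\
    (exists h, sigma b ++ w = (w ++ q) ++ d :: h).
Proof.
move=> E [g0 [g0n Ha0]] [h0 [h0n Hb0]].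
have E' : ms Z ++ w = (L ++ c :: s ++ ms v) ++ w ++ (q ++ d :: R).
  by rewrite E -!catA /= -!catA.
have [Zp [Zs [EZ Hp]]] := cut E'.
have H0 : ms Zp = (L ++ c :: s) ++ ms v by rewrite Hp -catA.
have [Zq [EZp Hq]] := lem2 H0.
have Rs : ms Zs ++ w = (w ++ q) ++ d :: R.
  move: E; rewrite EZ ms_cat Hp -!catA /= -!catA => E.
  by apply: (@catL _ (L ++ c :: s ++ ms v)); rewrite -!catA /= -!catA.
case/lastP: Zq EZp Hq => [|Zq a] EZp Hq.
  by have := congr1 size Hq; rewrite size_cat /=; lia.
rewrite ms_rcons in Hq.
have [g Hg] : exists g, sigma a = g ++ c :: s.
  have hs := congr1 size Hq; rewrite !size_cat /= in hs.
  have [hle|hlt] := leqP (size (sigma a)) (size s).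
    have h : size (ms Zq) >= size (L ++ [:: c]) by rewrite size_cat /=; lia.
    have Hq' : ms Zq ++ sigma a = (L ++ [:: c]) ++ s by rewrite Hq -catA.
    have [m [_ Em]] := cat_split (esym Hq') h.
    have : g0 ++ m = [::] by apply: (@lemsuf a a0); rewrite Ha0 Em catA.
    by case: g0 g0n {Ha0}.
  have h : size (ms Zq) <= size L by lia.
  have [m [_ Em]] := cat_split Hq h.
  by exists m.
case: Zs EZ Rs => [|b Zs] EZ Rs.
  by have := congr1 size Rs; rewrite /= !size_cat /=; lia.
have [q1 Hq1] := startw Zs.
rewrite ms_cons -catA Hq1 in Rs.
have [h Hh] : exists h, sigma b ++ w = (w ++ q) ++ d :: h.
  have hs := congr1 size Rs; rewrite !size_cat /= in hs.
  have [hle|hlt] := leqP (size (sigma b ++ w)) (size (w ++ q)).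
    have Rs2 : (sigma b ++ w) ++ q1 = (w ++ q) ++ d :: R by rewrite -catA.
    have [m [Em _]] := cat_split Rs2 hle.
    exfalso; apply: (@key b0 [::] (sigma b) (m ++ h0)).
    - by rewrite cats0 Hb0 Em -!catA.
    - exact: sig_ne.
    - have := congr1 size Hb0; rewrite Em !size_cat.
      have : size h0 > 0 by case: (h0) h0n.
      lia.
  have h : size ((w ++ q) ++ [:: d]) <= size (sigma b ++ w) by move: hlt; rewrite !size_cat /=; lia.
  have Rs' : (sigma b ++ w) ++ q1 = ((w ++ q) ++ [:: d]) ++ R by rewrite -catA Rs -!catA /=.
  have [m [Em _]] := cat_split (esym Rs') h.
  by exists m; rewrite Em -catA.
exists a, b; split; last by split; [exists g | exists h].
by exists Zq, Zs; rewrite EZ EZp -cats1 -!catA.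
Qed.

Lemma phiL_eq a g c s : sigma a = g ++ c :: s -> phiL sigma s a = c.
Proof.
move=> E; rewrite /phiL E size_cat /=.
have -> : (size g + (size s).+1 - size s).-1 = size g by lia.
by rewrite nth_cat ltnn subnn.
Qed.

Lemma phiR_eq b p d h : sigma b ++ w = p ++ d :: h -> phiR sigma w p b = d.
Proof. by move=> E; rewrite /phiR E nth_cat ltnn subnn. Qed.

Lemma AL_of a g c s : sigma a = g ++ c :: s -> AL sigma s a.
Proof. by move=> E; exists (g ++ [:: c]); split; [case: g E | rewrite E -catA]. Qed.

Lemma AR_of b p d h : sigma b ++ w = p ++ d :: h -> AR sigma w p b.
Proof. by move=> E; exists (d :: h). Qed.

Lemma lcp_cat (l x y : seq A) : lcp (l ++ x) (l ++ y) = l ++ lcp x y.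
Proof. by elim: l => //= z l ->; rewrite eqxx. Qed.

Lemma lcp_eq (p x y : seq A) c1 c2 : c1 != c2 -> lcp (p ++ c1 :: x) (p ++ c2 :: y) = p.
Proof. by move=> h; rewrite lcp_cat /= (negbTE h) cats0. Qed.

Lemma rev_form (g s : seq A) c : rev (g ++ c :: s) = rev s ++ c :: rev g.
Proof. by rewrite rev_cat rev_cons cat_rcons. Qed.

Lemma lcs_eq (g1 g2 s : seq A) c1 c2 : c1 != c2 -> lcs (g1 ++ c1 :: s) (g2 ++ c2 :: s) = s.
Proof. by move=> h; rewrite /lcs !rev_form lcp_eq // revK. Qed.

Lemma lcp_dec (x y : seq A) : exists x' y', x = lcp x y ++ x' /\ y = lcp x y ++ y' /\
  (x' = [::] \/ y' = [::] \/ exists c1 c2 x'' y'', [/\ c1 != c2, x' = c1 :: x'' & y' = c2 :: y'']).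
Proof.
elim: x y => [|a x IH] [|b y] /=.
- by exists [::], [::]; split; [|split; [|left]].
- by exists [::], (b :: y); split; [|split; [|left]].
- by exists (a :: x), [::]; split; [|split; [|right; left]].
case: eqVneq => [<-|hab].
  have [x' [y' [E1 [E2 H]]]] := IH y.
  by exists x', y'; rewrite /= -E1 -E2.
by exists (a :: x), (b :: y); split => //; split => //; right; right; exists a, b, x, y.
Qed.

Lemma lcs_ret a1 a2 : a1 != a2 -> exists g1 g2 c1 c2, [/\ c1 != c2,
  sigma a1 = g1 ++ c1 :: lcs (sigma a1) (sigma a2) &
  sigma a2 = g2 ++ c2 :: lcs (sigma a1) (sigma a2)].
Proof.
move=> hne; rewrite /lcs.
have [x' [y' [E1 [E2 H]]]] := lcp_dec (rev (sigma a1)) (rev (sigma a2)).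
set l := lcp _ _ in E1 E2 *.
have F1 : sigma a1 = rev x' ++ rev l by rewrite -rev_cat -E1 revK.
have F2 : sigma a2 = rev y' ++ rev l by rewrite -rev_cat -E2 revK.
case: H => [x0|[y0|[c1 [c2 [x'' [y'' [hc ex ey]]]]]]].
- exfalso; move: F1 F2; rewrite x0 /= => F1 F2.
  rewrite -F1 in F2; have := lemsuf F2; move=> r0.
  by move: F2; rewrite r0 => /sig_inj /esym; apply/eqP.
- exfalso; move: F1 F2; rewrite y0 /= => F1 F2.
  rewrite -F2 in F1; have := lemsuf F1; move=> r0.
  by move: F1; rewrite r0 => /sig_inj; apply/eqP.
exists (rev x''), (rev y''), c1, c2; split => //.
- by rewrite F1 ex rev_cons cat_rcons.
- by rewrite F2 ey rev_cons cat_rcons.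
Qed.

Lemma lcp_ret b1 b2 : b1 != b2 -> exists h1 h2 d1 d2 q, [/\ d1 != d2,
  sigma b1 ++ w = lcp (sigma b1 ++ w) (sigma b2 ++ w) ++ d1 :: h1,
  sigma b2 ++ w = lcp (sigma b1 ++ w) (sigma b2 ++ w) ++ d2 :: h2 &
  lcp (sigma b1 ++ w) (sigma b2 ++ w) = w ++ q].
Proof.
move=> hne.
have [r1 Hr1] := startw [:: b1]; have [r2 Hr2] := startw [:: b2].
rewrite !ms1 in Hr1 Hr2.
have Hw : lcp (sigma b1 ++ w) (sigma b2 ++ w) = w ++ lcp r1 r2 by rewrite Hr1 Hr2 lcp_cat.
have [x' [y' [E1 [E2 H]]]] := lcp_dec (sigma b1 ++ w) (sigma b2 ++ w).
set l := lcp _ _ in E1 E2 Hw *.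
case: H => [x0|[y0|[c1 [c2 [x'' [y'' [hc ex ey]]]]]]].
- exfalso; rewrite x0 cats0 in E1; rewrite -E1 in E2.
  case: y' E2 => [|y y'] E2.
    by move: E2; rewrite cats0 => /catR /sig_inj /esym; apply/eqP.
  apply: (@key b2 [::] (sigma b1) (y :: y')); first by rewrite cats0 E2 catA.
    exact: sig_ne.
  by have := congr1 size E2; rewrite !size_cat /=; lia.
- exfalso; rewrite y0 cats0 in E2; rewrite -E2 in E1.
  case: x' E1 => [|y x'] E1.
    by move: E1; rewrite cats0 => /catR /sig_inj; apply/eqP.
  apply: (@key b1 [::] (sigma b2) (y :: x')); first by rewrite cats0 E1 catA.
    exact: sig_ne.
  by have := congr1 size E1; rewrite !size_cat /=; lia.
by exists x'', y'', c1, c2, (lcp r1 r2); split; rewrite -?ex -?ey.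
Qed.

End Words.

Lemma size_win (T : Type) (x : int -> T) i n : size (win x i n) = n.
Proof. by rewrite /win size_map size_iota. Qed.

Lemma win_cat (T : Type) (x : int -> T) i n1 n2 :
  win x i (n1 + n2) = win x i n1 ++ win x (i + n1%:Z)%R n2.
Proof.
rewrite /win iotaD map_cat; congr (_ ++ _).
rewrite add0n -{1}[n1]addn0 iotaDl -map_comp; apply: eq_map => j /=.
by congr x; rewrite PoszD GRing.addrA.
Qed.

Lemma win_factor (T : Type) (y : int -> T) (b i : int) (N n : nat) :
  (b <= i)%R -> (i + n%:Z <= b + N%:Z)%R ->
  exists L R, win y b N = L ++ win y i n ++ R.
Proof.
move=> h1 h2.
set d := absz (i - b)%R.
have -> : N = d + (n + (N - d - n)) by rewrite /d; lia.
rewrite !win_cat.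
have -> : (b + d%:Z = i)%R by rewrite /d; lia.
by eexists; eexists.
Qed.

Lemma lang_win (T : Type) (Y : (int -> T) -> Prop) y i n : Y y -> lang Y (win y i n).
Proof. by move=> Yy; exists y; split => //; exists i; rewrite size_win. Qed.

Lemma lang_factor (T : Type) (Y : (int -> T) -> Prop) L t R : lang Y (L ++ t ++ R) -> lang Y t.
Proof.
move=> [y [Yy [i E]]]; exists y; split => //.
exists (i + (size L)%:Z)%R.
move: E; rewrite !size_cat !win_cat => E.
have h1 : size (win y i (size L)) <= size L by rewrite size_win.
have [m [E1 E2]] := cat_split E h1.
have m0 : m = [::] by have := congr1 size E1; rewrite size_cat size_win; case: m {E1 E2} => //= ? ? ; lia.
rewrite m0 /= in E2.
have h2 : size (win y (i + (size L)%:Z) (size t)) <= size t by rewrite size_win.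
have [m' [E3 E4]] := cat_split E2 h2.
have : m' = [::] by have := congr1 size E3; rewrite size_cat size_win; case: m' {E3 E4} => //= ? ? ; lia.
by move=> m1; rewrite E3 m1 cats0 size_win.
Qed.

Section Inf.
Variable A : eqType.
Variable sigma : A -> seq A.
Variable w : seq A.
Hypothesis Hret : is_return_morphism sigma w.
Local Notation ms := (mword sigma).

Lemma size_ms_win x i n : n <= size (ms (win x i n)).
Proof. by have := size_ms Hret (win x i n); rewrite size_win. Qed.

Lemma langdown X t : lang (sigma_dot sigma X) t ->
  exists Z L R, lang X Z /\ ms Z = L ++ t ++ R.
Proof.
move=> [y [[x [Xx [k [klt W]]]] [i Wt]]].
pose m := (absz i + size t)%N.
have Wm : win y (- ((k + size (ms (win x (- m%:Z)%R m)))%:Z))%R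
   (size (ms (win x (- m%:Z)%R (2 * m).+1))) = ms (win x (- m%:Z)%R (2 * m).+1) := W m.
have Efull : win x (- m%:Z)%R (2 * m).+1 = win x (- m%:Z)%R m ++ ([:: x 0%R] ++ win x 1%R m).
  have -> : (2 * m).+1 = m + (1 + m) by lia.
  rewrite !win_cat.
  have -> : (- m%:Z + m%:Z = 0)%R by lia.
  by rewrite /win /= GRing.addr0 GRing.add0r.
have spre := size_ms_win x (- m%:Z)%R m.
have spost := size_ms_win x 1%R m.
have sx := sig_ne Hret (x 0%R).
move: Wm; rewrite Efull !ms_cat ms1 !size_cat => Wm.
have h1 : (- ((k + size (ms (win x (- m%:Z)%R m)))%:Z) <= i)%R by rewrite /m in spre *; lia.
have h2 : (i + (size t)%:Z <= - ((k + size (ms (win x (- m%:Z)%R m)))%:Z) +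
   (size (ms (win x (- m%:Z)%R m)) + (size (sigma (x 0%R)) + size (ms (win x 1 m))))%:Z)%R.
  by rewrite /m in spre spost *; lia.
have [L [R E]] := win_factor y h1 h2.
exists (win x (- m%:Z)%R (2 * m).+1), L, R; split; first exact: lang_win.
by rewrite Efull !ms_cat ms1 -Wm E Wt.
Qed.

Definition ypos (x : int -> A) (n : nat) := nth (x 0%R) (ms (win x 0 n.+1)) n.
Definition yneg (x : int -> A) (N : nat) :=
  nth (x 0%R) (ms (win x (- N%:Z)%R N)) (size (ms (win x (- N%:Z)%R N)) - N).
Definition yof (x : int -> A) (z : int) :=
  if (0 <= z)%R then ypos x (absz z) else yneg x (absz z).

Lemma nth_pref1 x i n1 n2 j d : n1 <= n2 -> j < size (ms (win x i n1)) ->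
  nth d (ms (win x i n1)) j = nth d (ms (win x i n2)) j.
Proof.
move=> h hj; have -> : n2 = n1 + (n2 - n1) by lia.
by rewrite win_cat ms_cat nth_cat hj.
Qed.

Lemma nth_pref x i n1 n2 j d : j < size (ms (win x i n1)) -> j < size (ms (win x i n2)) ->
  nth d (ms (win x i n1)) j = nth d (ms (win x i n2)) j.
Proof.
move=> h1 h2; have [le|lt] := leqP n1 n2; first exact: nth_pref1.
by rewrite (@nth_pref1 x i n2 n1) // ltnW.
Qed.

Lemma nth_suf1 x n1 n2 N d : n1 <= n2 -> N <= size (ms (win x (- n1%:Z)%R n1)) ->
  nth d (ms (win x (- n1%:Z)%R n1)) (size (ms (win x (- n1%:Z)%R n1)) - N) =
  nth d (ms (win x (- n2%:Z)%R n2)) (size (ms (win x (- n2%:Z)%R n2)) - N).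
Proof.
move=> h hN.
have -> : n2 = (n2 - n1) + n1 by lia.
rewrite win_cat.
have -> : (- ((n2 - n1 + n1)%:Z) + (n2 - n1)%:Z = - n1%:Z)%R by lia.
rewrite ms_cat size_cat nth_cat ifF; last by lia.
congr nth; lia.
Qed.

Lemma nth_suf x n1 n2 N d : N <= size (ms (win x (- n1%:Z)%R n1)) ->
  N <= size (ms (win x (- n2%:Z)%R n2)) ->
  nth d (ms (win x (- n1%:Z)%R n1)) (size (ms (win x (- n1%:Z)%R n1)) - N) =
  nth d (ms (win x (- n2%:Z)%R n2)) (size (ms (win x (- n2%:Z)%R n2)) - N).
Proof.
move=> h1 h2; have [le|lt] := leqP n1 n2; first exact: nth_suf1.
by rewrite (@nth_suf1 x n2 n1) // ltnW.
Qed.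

Lemma yof_win x m :
  win (yof x) (- ((size (ms (win x (- m%:Z)%R m)))%:Z))%R (size (ms (win x (- m%:Z)%R (2 * m).+1)))
  = ms (win x (- m%:Z)%R (2 * m).+1).
Proof.
have Ef : win x (- m%:Z)%R (2 * m).+1 = win x (- m%:Z)%R m ++ win x 0 m.+1.
  have -> : (2 * m).+1 = m + m.+1 by lia.
  rewrite win_cat; have -> : (- m%:Z + m%:Z = 0)%R by lia.
  by [].
rewrite Ef ms_cat.
set pre := ms (win x (- m%:Z)%R m); set post := ms (win x 0 m.+1).
apply: (@eq_from_nth _ (x 0%R)); first by rewrite size_win.
rewrite size_win => j hj.
rewrite /win (nth_map 0%N); last by rewrite size_iota.
rewrite nth_iota // add0n nth_cat.
rewrite /yof.
have [hjp|hjp] := ltnP j (size pre).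
  rewrite ifF; last by lia.
  rewrite /yneg.
  have -> : absz (- (size pre)%:Z + j%:Z)%R = (size pre - j)%N by lia.
  have -> : j = (size pre - (size pre - j))%N by lia.
  rewrite subKn; last by lia.
  apply: nth_suf; first exact: size_ms_win.
  rewrite -/pre; lia.
rewrite ifT; last by lia.
rewrite /ypos.
have -> : absz (- (size pre)%:Z + j%:Z)%R = (j - size pre)%N by lia.
apply: nth_pref; first by have := size_ms_win x 0 (j - size pre).+1; lia.
rewrite -/post; move: hj; rewrite size_cat; lia.
Qed.

Lemma yof_in X x : X x -> sigma_dot sigma X (yof x).
Proof.
move=> Xx; exists x; split => //; exists 0; split; first exact: (sig_ne Hret).
by move=> m /=; rewrite add0n yof_win.
Qed.

Lemma langup X x i n : X x -> lang (sigma_dot sigma X) (ms (win x i n)).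
Proof.
move=> Xx.
pose m := (absz i + n)%N.
have h1 : (- m%:Z <= i)%R by rewrite /m; lia.
have h2 : (i + n%:Z <= - m%:Z + ((2 * m).+1)%:Z)%R by rewrite /m; lia.
have [L [R E]] := win_factor x h1 h2.
apply: (@lang_factor _ _ (ms L) _ (ms R)).
rewrite -!ms_cat -E -yof_win.
exact/lang_win/yof_in.
Qed.

Lemma langup2 X Z L t R : lang X Z -> ms Z ++ w = L ++ t ++ R ->
  lang (sigma_dot sigma X) t.
Proof.
move=> [x [Xx [i Ei]]] E.
have [q Hq] := startw Hret (win x (i + (size Z)%:Z)%R (size w)).
have hs : size w <= size (ms (win x (i + (size Z)%:Z)%R (size w))) by exact: size_ms_win.
have [r [Er _]] := cat_split (esym Hq) hs.
have := @langup X x i (size Z + size w) Xx.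
rewrite win_cat ms_cat Ei Er catA E -!catA.
exact: lang_factor.
Qed.

End Inf.

Lemma extdown (A : eqType) (sigma : A -> seq A) w X v s q c d a0 b0 :
  is_return_morphism sigma w ->
  ext (sigma_dot sigma X) (s ++ mword sigma v ++ (w ++ q)) c d ->
  AL sigma s a0 -> AR sigma w (w ++ q) b0 ->
  exists a b, ext X v a b /\ (exists g, sigma a = g ++ c :: s) /\
    (exists h, sigma b ++ w = (w ++ q) ++ d :: h).
Proof.
move=> Hret /(langdown Hret) [Z [L [R [LZ EZ]]]] HAL HAR.
have E : mword sigma Z ++ w = L ++ c :: s ++ mword sigma v ++ (w ++ q) ++ d :: (R ++ w).
  by rewrite EZ -!catA /= -!catA.
have [a [b [[Z1 [Z2 EZ2]] [G H]]]] := desub Hret E HAL HAR.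
exists a, b; split => //.
apply: (@lang_factor _ _ Z1 _ Z2).
have -> : Z1 ++ (a :: v ++ [:: b]) ++ Z2 = Z by rewrite EZ2 /= -catA.
exact: LZ.
Qed.

Lemma extup (A : eqType) (sigma : A -> seq A) w X v a b g c s p d h :
  is_return_morphism sigma w -> ext X v a b ->
  sigma a = g ++ c :: s -> sigma b ++ w = p ++ d :: h ->
  ext (sigma_dot sigma X) (s ++ mword sigma v ++ p) c d.
Proof.
move=> Hret Hx G H.
apply: (@langup2 _ sigma w Hret X (a :: v ++ [:: b]) g _ h Hx).
rewrite ms_cons ms_cat ms1 G -!catA H /= -!catA //.
Qed.

Theorem mainTheorem19 (A : finType) (X : (int -> A) -> Prop) (sigma : A -> seq A)
  (w : seq A) (preL preR leL leR : rel A) :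
  is_shift_space X ->
  is_return_morphism sigma w ->
  (forall w', is_return_morphism sigma w' -> size w' <= size w) ->
  total_order preL -> total_order preR -> total_order leL -> total_order leR ->
  planar_preserving sigma w preL preR leL leR ->
  forall v, lang X v ->
    (planar X preL preR v <->
     forall u, ext_image sigma w X v u -> planar (sigma_dot sigma X) leL leR u).
Proof.
move=> _ Hret _ [rL aL tL toL] [rR aR tR toR] [rl al tl tol] [rr ar tr tor] [PL PR] v _.
split.
- move=> Hv u [s [p [[q ->] [-> [[a0 [b0 [_ [HAL HAR]]]] _]]]]].
  move=> c1 d1 c2 d2 E1 E2 Hl Hne.
  have [a1 [b1 [X1 [[g1 G1] [h1 H1]]]]] := extdown Hret E1 HAL HAR.
  have [a2 [b2 [X2 [[g2 G2] [h2 H2]]]]] := extdown Hret E2 HAL HAR.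
  have [->|dne] := eqVneq d1 d2; first exact: rr.
  have bne : b1 != b2.
    by apply/eqP => eb; move: dne; rewrite -(phiR_eq H1) -(phiR_eq H2) eb eqxx.
  have ane : a1 != a2.
    by apply/eqP => ea; move: Hne; rewrite -(phiL_eq G1) -(phiL_eq G2) ea eqxx.
  have TLs : TL sigma s by exists a1, a2; split => //; rewrite G1 G2 lcs_eq.
  have TRp : TR sigma w (w ++ q) by exists b1, b2; split => //; rewrite H1 H2 lcp_eq.
  case/orP: (toL a1 a2) => hpa.
    have hpr := Hv a1 b1 a2 b2 X1 X2 hpa ane.
    have := PR _ TRp b1 b2 (AR_of H1) (AR_of H2) hpr bne.
    by rewrite (phiR_eq H1) (phiR_eq H2).
  have := PL _ TLs a2 a1 (AL_of G2) (AL_of G1) hpa (ltac:(by rewrite eq_sym)).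
  rewrite (phiL_eq G1) (phiL_eq G2) => h.
  by exfalso; move: Hne; rewrite (al c1 c2) ?eqxx // Hl h.
- move=> H a1 b1 a2 b2 X1 X2 hpa ane.
  case/orP: (toR b1 b2) => // hb.
  have [->|bne] := eqVneq b1 b2; first exact: rR.
  have [g1 [g2 [c1 [c2 [cne G1 G2]]]]] := lcs_ret Hret ane.
  have [h1 [h2 [d1 [d2 [q [dne H1 H2 Pq]]]]]] := lcp_ret Hret bne.
  set s := lcs _ _ in G1 G2.
  set p := lcp _ _ in H1 H2 Pq.
  have E1 := extup Hret X1 G1 H1.
  have E2 := extup Hret X2 G2 H2.
  have hu : ext_image sigma w X v (s ++ mword sigma v ++ p).
    exists s, p; split; first by exists q.
    split => //; split; first by exists a1, b1; split => //; split; [exact: AL_of G1 | exact: AR_of H1].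
    by apply: (@lang_factor _ _ [:: c1] _ [:: d1]).
  have hl : leL c1 c2.
    have := PL s (ex_intro _ a1 (ex_intro _ a2 (conj ane erefl))) a1 a2 (AL_of G1) (AL_of G2) hpa ane.
    by rewrite (phiL_eq G1) (phiL_eq G2).
  have h12 := H _ hu c1 d1 c2 d2 E1 E2 hl cne.
  have := PR p (ex_intro _ b1 (ex_intro _ b2 (conj bne erefl))) b2 b1 (AR_of H2) (AR_of H1) hb (ltac:(by rewrite eq_sym)).
  rewrite (phiR_eq H1) (phiR_eq H2) => h21.
  by exfalso; move: dne; rewrite (ar d1 d2) ?eqxx // h12 h21.
Qed.
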